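(* Let $Q=(Q_0,Q_1,\rho)$ be a finite $n$-properly-graded bound quiver with fixed basis $\mathcal M$ of $\Lambda_n$ as below. If $Q$ is nicely-graded, then $\mathbb Z|_{n-1}Q$ is also nicely-graded.
   Context: $k$ is a field. Bound quivers have relations that are linear combinations of paths of equal length $\ge 2$ with common source and target; paths are composed right to left; $s(p),t(p),l(p)$ denote source, target, length; $\Lambda=kQ/(\rho)$ is graded by path length and a bound path is a path with nonzero image. $Q$ is $n$-properly-graded if all maximal bound paths have length $n$. A walk is a sequence $w=(p_0,\dots,p_r)$ of paths with $l(p_h)>0$ for $0<h<r$, $t(p_{2h})=t(p_{2h+1})$, $s(p_{2h+1})=s(p_{2h+2})$, from $s(p_0)$ to $t(p_r)$ ($r$ even) or $s(p_r)$ ($r$ odd), cyclic if start equals end, with grade $\sum_h(-1)^hl(p_h)$; a quiver is nicely-graded if every cyclic walk has grade $0$. For $Q$ finite $n$-properly-graded, fix a basis $\mathcal M$ of $\Lambda_n$ consisting of images of maximal bound paths. The quiver $\mathbb Z|_{n-1}Q$ has vertex set $Q_0\times\mathbb Z$ and arrows $(\alpha,t):(i,t)\to(j,t)$ for each arrow $\alpha:i\to j$ of $Q$ and $t\in\mathbb Z$, and $(\beta_p,t):(t(p),t)\to(s(p),t+1)$ for each $p\in\mathcal M$ and $t\in\mathbb Z$. (Its relations, which play no role in being nicely-graded, are the lifts of the relations of the trivial extension $\Lambda\ltimes D\Lambda$.) *)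

(* Defs.v *)
From HB Require Import structures.
From mathcomp Require Import all_boot all_order all_algebra.
Set Implicit Arguments. Unset Strict Implicit. Unset Printing Implicit Defensive.
Import Order.TTheory GRing.Theory Num.Theory.
Local Open Scope ring_scope.

(* A quiver is given by a vertex type V, an arrow type A and maps      *)
(* src tgt : A -> V.  A path is a pair (v, [:: a_1; ...; a_m]) with    *)
(* starting vertex v and arrows listed in the order they are traversed *)
(* (so it denotes the composite a_m ... a_1, composition right to     *)
(* left); (v, [::]) is the trivial path e_v.                           *)

Section Quiver.
Variables (V A : Type) (src tgt : A -> V).

Definition qpath := (V * seq A)%type.

Fixpoint arrows_ok (v : V) (s : seq A) : Prop :=
  match s with
  | [::] => True
  | a :: s' => src a = v /\ arrows_ok (tgt a) s'
  end.

Definition path_ok (p : qpath) : Prop := arrows_ok p.1 p.2.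
Definition psrc (p : qpath) : V := p.1.
Definition ptgt (p : qpath) : V := last p.1 (map tgt p.2).
Definition plen (p : qpath) : nat := size p.2.

(* A walk w = (p_0, ..., p_r), given as p0 :: ps (so r = size ps). *)
Definition is_walk (p0 : qpath) (ps : seq qpath) : Prop :=
  let w := p0 :: ps in
  [/\ forall h, (h < size w)%N -> path_ok (nth p0 w h),
      forall h, (0 < h)%N -> (h < size w - 1)%N -> (0 < plen (nth p0 w h))%N &
      forall h, (h.+1 < size w)%N ->
        if odd h then psrc (nth p0 w h) = psrc (nth p0 w h.+1)
        else ptgt (nth p0 w h) = ptgt (nth p0 w h.+1)].

Definition walk_start (p0 : qpath) (ps : seq qpath) : V := psrc p0.

Definition walk_end (p0 : qpath) (ps : seq qpath) : V :=
  let r := size ps in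
  let pr := nth p0 (p0 :: ps) r in
  if odd r then psrc pr else ptgt pr.

Definition walk_grade (p0 : qpath) (ps : seq qpath) : int :=
  let w := p0 :: ps in
  \sum_(h < size w) (-1) ^+ h * ((plen (nth p0 w h) : nat) : int).

Definition nicely_graded : Prop :=
  forall (p0 : qpath) (ps : seq qpath),
    is_walk p0 ps -> walk_start p0 ps = walk_end p0 ps ->
    walk_grade p0 ps = 0.

End Quiver.

(* Elements of kQ are represented as coefficient functions path -> k. *)

Section BoundQuiver.
Variables (k : fieldType) (V A : finType) (src tgt : A -> V).

Local Notation path := (qpath V A).

Definition pvec (p : path) : path -> k := fun q => (q == p)%:R.

Definition relation := seq (k * path).

Definition rel_vec (r : relation) : path -> k :=
  fun q => \sum_(x <- r) x.1 * (x.2 == q)%:R.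

Definition is_relation (r : relation) : Prop :=
  (forall x, x \in r -> path_ok src tgt x.2 /\ (2 <= plen x.2)%N) /\
  (forall x y, x \in r -> y \in r ->
     [/\ plen x.2 = plen y.2, psrc x.2 = psrc y.2 &
         ptgt tgt x.2 = ptgt tgt y.2]).

(* the composite u p v (first v, then p, then u) if defined *)
Definition pcomp3 (u p v : path) : option path :=
  if (ptgt tgt v == psrc p) && (ptgt tgt p == psrc u)
  then Some (psrc v, v.2 ++ p.2 ++ u.2) else None.

Definition gen_vec (u : path) (r : relation) (v : path) : path -> k :=
  fun q => \sum_(x <- r) x.1 * (pcomp3 u x.2 v == Some q)%:R.

Definition in_ideal (rho : relation -> Prop) (x : path -> k) : Prop :=
  exists l : seq (k * path * relation * path),
    (forall e, e \in l ->
       [/\ rho e.1.2, path_ok src tgt e.1.1.2 & path_ok src tgt e.2]) /\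
    (forall q, x q = \sum_(e <- l) e.1.1.1 * gen_vec e.1.1.2 e.1.2 e.2 q).

Definition bound_path (rho : relation -> Prop) (p : path) : Prop :=
  path_ok src tgt p /\ ~ in_ideal rho (pvec p).

Definition maximal_bound_path (rho : relation -> Prop) (p : path) : Prop :=
  [/\ bound_path rho p,
      (forall a : A, src a = ptgt tgt p -> ~ bound_path rho (psrc p, rcons p.2 a)) &
      (forall a : A, tgt a = psrc p -> ~ bound_path rho (src a, a :: p.2))].

Definition properly_graded (rho : relation -> Prop) (n : nat) : Prop :=
  forall p, maximal_bound_path rho p -> plen p = n.

Definition is_top_basis (rho : relation -> Prop) (n m : nat)
    (M : 'I_m -> path) : Prop :=
  [/\ forall i, maximal_bound_path rho (M i),
      (forall c : 'I_m -> k,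
         in_ideal rho (fun q => \sum_i c i * pvec (M i) q) -> forall i, c i = 0) &
      (forall q, path_ok src tgt q -> plen q = n ->
         exists c : 'I_m -> k,
           in_ideal rho (fun x => pvec q x - \sum_i c i * pvec (M i) x))].

(* The quiver Z|_{n-1} Q : vertices Q_0 x Z, arrows (alpha, t) and
   (beta_p, t) for p in M. *)
Definition ZQ_arrow (m : nat) := ((A * int) + ('I_m * int))%type.

Definition ZQ_src (m : nat) (M : 'I_m -> path) (x : ZQ_arrow m) : V * int :=
  match x with
  | inl (a, t) => (src a, t)
  | inr (i, t) => (ptgt tgt (M i), t)
  end.

Definition ZQ_tgt (m : nat) (M : 'I_m -> path) (x : ZQ_arrow m) : V * int :=
  match x with
  | inl (a, t) => (tgt a, t)
  | inr (i, t) => (psrc (M i), t + 1)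
  end.

End BoundQuiver.

(* Main.v *)
Require Import Defs.
From mathcomp Require Import all_boot all_order all_algebra.
From mathcomp Require Import zify ring lra.
Set Implicit Arguments. Unset Strict Implicit. Unset Printing Implicit Defensive.
Import Order.TTheory GRing.Theory Num.Theory.
Local Open Scope ring_scope.

Section Gen.
Variables (V A : Type) (src tgt : A -> V).
Local Notation path := (qpath V A).

Definition link (par : bool) (p q : path) : Prop :=
  if par then psrc p = psrc q else ptgt tgt p = ptgt tgt q.

Definition W (par : bool) (p0 : path) (ps : seq path) : Prop :=
  [/\ forall h, (h <= size ps)%N -> path_ok src tgt (nth p0 (p0 :: ps) h),
      forall h, (0 < h)%N -> (h < size ps)%N -> (0 < plen (nth p0 (p0 :: ps) h))%N &
      forall h, (h < size ps)%N ->
        link (odd h (+) par) (nth p0 (p0 :: ps) h) (nth p0 (p0 :: ps) h.+1)].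

Lemma walkW p0 ps : is_walk src tgt p0 ps <-> W false p0 ps.
Proof.
rewrite /is_walk /W /= subn1 /=; split; case=> H1 H2 H3; split=> // h Hh.
- by have := H3 h Hh; rewrite addbF /link; case: (odd h).
- by have := H3 h Hh; rewrite addbF /link; case: (odd h).
Qed.

Lemma W_nil par p : W par p [::] <-> path_ok src tgt p.
Proof.
split; first by case=> H _ _; exact: (H 0%N).
move=> H; split=> //.
  by move=> h; rewrite leqn0 => /eqP ->.
Qed.

Lemma W_cons par p q ps : W par p (q :: ps) <->
  [/\ path_ok src tgt p, link par p q, (ps <> [::] -> (0 < plen q)%N) & W (~~ par) q ps].
Proof.
split.
- case=> H1 H2 H3; split.
  + exact: (H1 0%N).
  + exact: (H3 0%N).
  + by case: ps H2 {H1 H3} => // r ps H2 _; exact: (H2 1%N).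
  + split.
    * move=> h Hh; rewrite (set_nth_default p) //; exact: (H1 h.+1).
    * move=> h H0 Hh; rewrite (set_nth_default p); last by rewrite /= ltnS ltnW.
      exact: (H2 h.+1).
    * move=> h Hh; rewrite [nth q (q :: ps) h](set_nth_default p); last by rewrite /= ltnS ltnW.
      rewrite [nth q (q :: ps) h.+1](set_nth_default p) //.
      have := H3 h.+1 Hh; rewrite /=; by case: (odd h); case: (par).
- case=> H1 H2 H3 [H4 H5 H6]; split.
  + case=> [|h] Hh //=; rewrite (set_nth_default q) //; exact: H4.
  + case=> [|h] // _ Hh /=; rewrite (set_nth_default q) /=; last by rewrite ltnS ltnW.
    case: h Hh => [|h] Hh; first by apply: H3; case: ps Hh {H4 H5 H6}.
    exact: H5.
  + case=> [|h] Hh //=; rewrite (set_nth_default q) /=; last by rewrite ltnW.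
    rewrite [nth p ps h](set_nth_default q) //.
    have := H6 h Hh; by case: (odd h); case: (par).
Qed.


Fixpoint sok (v : V) (s : seq (A * bool)) : Prop :=
  match s with
  | [::] => True
  | (a, b) :: s' => (if b then src a = v else tgt a = v) /\
                    sok (if b then tgt a else src a) s'
  end.

Fixpoint send (v : V) (s : seq (A * bool)) : V :=
  match s with
  | [::] => v
  | (a, b) :: s' => send (if b then tgt a else src a) s'
  end.

Fixpoint sgr (s : seq (A * bool)) : int :=
  match s with
  | [::] => 0
  | (a, b) :: s' => (if b then 1 else -1) + sgr s'
  end.

Lemma sok_cat v s1 s2 : sok v (s1 ++ s2) <-> sok v s1 /\ sok (send v s1) s2.
Proof.
elim: s1 v => [|[a b] s1 IH] v /=; first by split=> [H|[]].
rewrite IH; tauto.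
Qed.

Lemma send_cat v s1 s2 : send v (s1 ++ s2) = send (send v s1) s2.
Proof. by elim: s1 v => [|[a b] s1 IH] v //=. Qed.

Lemma sgr_cat s1 s2 : sgr (s1 ++ s2) = sgr s1 + sgr s2.
Proof. by elim: s1 => [|[a b] s1 IH] /=; rewrite ?add0r // IH addrA. Qed.

Lemma arrows_rcons v l a : arrows_ok src tgt v (rcons l a) <->
  arrows_ok src tgt v l /\ src a = last v (map tgt l).
Proof.
elim: l v => [|x l IH] v /=; first by tauto.
rewrite IH; tauto.
Qed.

Lemma fwd_ok v l : arrows_ok src tgt v l ->
  [/\ sok v [seq (a, true) | a <- l],
      send v [seq (a, true) | a <- l] = last v (map tgt l) &
      sgr [seq (a, true) | a <- l] = (size l)%:Z].
Proof.
elim: l v => [|a l IH] v //= [H1 H2].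
have [G1 G2 G3] := IH _ H2; split=> //.
by rewrite G3 -addn1 PoszD addrC.
Qed.

Lemma bwd_ok v l : arrows_ok src tgt v l ->
  [/\ sok (last v (map tgt l)) (rev [seq (a, false) | a <- l]),
      send (last v (map tgt l)) (rev [seq (a, false) | a <- l]) = v &
      sgr (rev [seq (a, false) | a <- l]) = - (size l)%:Z].
Proof.
elim: l v => [|a l IH] v //= [H1 H2].
have [S1 S2 S3] := IH _ H2.
rewrite rev_cons -cats1; split.
- apply/sok_cat; split=> //; rewrite S2 /=; done.
- by rewrite send_cat S2.
- by rewrite sgr_cat S3 /= addr0 -addn1 PoszD opprD.
Qed.

Definition rstart (par : bool) (p : path) : V :=
  if par then ptgt tgt p else psrc p.

Fixpoint rend (par : bool) (p : path) (ps : seq path) : V :=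
  match ps with
  | [::] => if par then psrc p else ptgt tgt p
  | q :: ps' => rend (~~ par) q ps'
  end.

Fixpoint rgrade (par : bool) (p : path) (ps : seq path) : int :=
  (-1) ^+ par * (plen p)%:Z +
  match ps with
  | [::] => 0
  | q :: ps' => rgrade (~~ par) q ps'
  end.

Definition seg (par : bool) (p : path) : seq (A * bool) :=
  if par then rev [seq (a, false) | a <- p.2] else [seq (a, true) | a <- p.2].

Lemma seg_ok par p : path_ok src tgt p ->
  [/\ sok (rstart par p) (seg par p),
      send (rstart par p) (seg par p) = (if par then psrc p else ptgt tgt p) &
      sgr (seg par p) = (-1) ^+ par * (plen p)%:Z].
Proof.
case: p => v l /= H; rewrite /rstart /seg /ptgt /psrc /plen /=.
case: par.
- by have [? ? ?] := bwd_ok H; rewrite expr1 mulN1r.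
- by have [? ? ?] := fwd_ok H; rewrite expr0 mul1r.
Qed.

Lemma walkA ps : forall par p, W par p ps ->
  exists s, [/\ sok (rstart par p) s, send (rstart par p) s = rend par p ps &
                sgr s = rgrade par p ps].
Proof.
elim: ps => [|q ps IH] par p.
- move/W_nil => H; have [S1 S2 S3] := seg_ok par H.
  by exists (seg par p); split=> //; rewrite S3 /= addr0.
- move/W_cons => [H1 H2 H3 H4].
  have [S1 S2 S3] := seg_ok par H1.
  have [s [T1 T2 T3]] := IH _ _ H4.
  have E : send (rstart par p) (seg par p) = rstart (~~ par) q.
    by rewrite S2; move: H2; rewrite /link /rstart; case: (par).
  exists (seg par p ++ s); split.
  + by apply/sok_cat; rewrite E.
  + by rewrite send_cat E.
  + by rewrite sgr_cat S3 T3.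
Qed.

Lemma W_replace par p p' ps : W par p ps -> path_ok src tgt p' ->
  (if par then psrc p' = psrc p else ptgt tgt p' = ptgt tgt p) ->
  W par p' ps /\ rend par p' ps = rend par p ps.
Proof.
case: ps => [|q ps].
- by move=> _ H E; split; [apply/W_nil|move: E => /=; case: (par)].
- move/W_cons => [H1 H2 H3 H4] H E; split=> //; apply/W_cons; split=> //.
  by move: H2 E; rewrite /link; case: (par) => -> .
Qed.

Lemma walkB s : forall v, sok v s -> forall par,
  exists p ps, [/\ W par p ps, rstart par p = v, rend par p ps = send v s &
                   rgrade par p ps = sgr s].
Proof.
elim: s => [|[a b] s IH] v.
- move=> _ par; exists (v, [::]), [::]; split=> //.
  + by apply/W_nil.
  + by rewrite /rstart; case: (par).
  + by rewrite /rend; case: (par).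
  + by rewrite /= mulr0 addr0.
- move=> /= [Hv Hs].
  have M : exists p ps, [/\ W (~~ b) p ps, rstart (~~ b) p = v,
              rend (~~ b) p ps = send (if b then tgt a else src a) s,
              rgrade (~~ b) p ps = (if b then 1 else -1) + sgr s & (0 < plen p)%N].
    have [p [ps [W1 W2 W3 W4]]] := IH _ Hs (~~ b).
    case: b Hv Hs W1 W2 W3 W4 => Hv Hs W1 W2 W3 W4.
    + exists (src a, a :: p.2), ps.
      have Pp : path_ok src tgt p.
        by case: W1 => HW _ _; exact: (HW 0%N).
      have P' : path_ok src tgt (src a, a :: p.2).
        have E1 : p.1 = tgt a by exact: W2.
        by split=> //; move: Pp; rewrite /path_ok E1.
      have [R1 R2] : W (~~ true) (src a, a :: p.2) ps /\
                     rend (~~ true) (src a, a :: p.2) ps = rend (~~ true) p ps.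
        apply: (W_replace W1 P').
        have E1 : p.1 = tgt a by exact: W2.
        by rewrite /ptgt /= -E1; case: (p).
      split=> //.
      * by rewrite R2.
      * move: W4; case: ps {R1 R2 W1 W3} => [|q ps] /=;
        rewrite /plen /= => <-; rewrite !expr0 !mul1r -addn1 PoszD; lra.
    + exists (p.1, rcons p.2 a), ps.
      have Pp : path_ok src tgt p.
        by case: W1 => HW _ _; exact: (HW 0%N).
      have P' : path_ok src tgt (p.1, rcons p.2 a).
        apply/arrows_rcons; split=> //; by rewrite -W2.
      have [R1 R2] : W (~~ false) (p.1, rcons p.2 a) ps /\
                     rend (~~ false) (p.1, rcons p.2 a) ps = rend (~~ false) p ps.
        by apply: W_replace.
      split=> //.
      * by rewrite /rstart /ptgt /= map_rcons last_rcons.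
      * by rewrite R2.
      * move: W4; case: ps {R1 R2 W1 W3} => [|q ps] /=;
        rewrite /plen /= size_rcons => <-; rewrite !expr1 -addn1 PoszD; lra.
      * by rewrite /plen size_rcons.
  move=> par.
  have [p [ps [M1 M2 M3 M4 M5]]] := M.
  case Epar: (par == ~~ b).
  + move/eqP: Epar => ->; by exists p, ps.
  + have Eb : par = b by case: (par) (b) Epar => [] [].
    subst par.
    exists (v, [::]), (p :: ps); split.
    * apply/W_cons; split=> //.
      - by move: M2; rewrite /link /rstart; case: (b) => /= ->.
    * by rewrite /rstart; case: (b).
    * by [].
    * by rewrite /= mulr0 add0r.
Qed.


Lemma rend_last ps : forall par p, rend par p ps =
  if odd (size ps) (+) par then psrc (last p ps) else ptgt tgt (last p ps).
Proof.
elim: ps => [|q ps IH] par p /=; first by case: (par).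
by rewrite IH; case: (odd (size ps)); case: (par).
Qed.

Lemma walk_end_rend p0 ps : walk_end tgt p0 ps = rend false p0 ps.
Proof.
rewrite rend_last addbF /walk_end.
have -> : nth p0 (p0 :: ps) (size ps) = last p0 ps by exact: (nth_last p0 (p0 :: ps)).
by [].
Qed.

Lemma rgrade_sum ps : forall (par : bool) p, rgrade par p ps =
  \sum_(h < (size ps).+1) (-1) ^+ (par + h) * (plen (nth p (p :: ps) h))%:Z.
Proof.
elim: ps => [|q ps IH] par p.
  by rewrite big_ord_recl big_ord0 /= addn0.
rewrite big_ord_recl /= IH addn0; congr (_ + _).
apply: eq_bigr => i _; rewrite add0n [nth p _ _](set_nth_default q) //.
congr (_ * _); rewrite -signr_odd -[in RHS]signr_odd; congr (_ ^+ _).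
rewrite /bump leq0n add1n; case: (par) => /=; rewrite ?addnS ?add0n ?add1n //=.
by rewrite negbK.
Qed.

Lemma walk_grade_r p0 ps : walk_grade p0 ps = rgrade false p0 ps.
Proof.
rewrite rgrade_sum /walk_grade /=; apply: eq_bigr => i _; by rewrite add0n.
Qed.

Lemma walk_to_steps p0 ps : is_walk src tgt p0 ps ->
  exists s, [/\ sok (walk_start p0 ps) s, send (walk_start p0 ps) s = walk_end tgt p0 ps &
               sgr s = walk_grade p0 ps].
Proof.
move/walkW/walkA => [s [S1 S2 S3]]; exists s.
by rewrite walk_end_rend walk_grade_r.
Qed.

Lemma steps_zero : nicely_graded src tgt -> forall v s, sok v s -> send v s = v -> sgr s = 0.
Proof.
move=> NG v s Hs He.
have [p [ps [W1 W2 W3 W4]]] := walkB Hs false.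
rewrite -W4 -walk_grade_r; apply: NG; first exact/walkW.
by rewrite /walk_start walk_end_rend W3 He -W2.
Qed.

End Gen.
Section ZQ.
Variables (V A : finType) (src tgt : A -> V) (m n : nat) (M : 'I_m -> qpath V A).
Hypothesis Mok : forall i, path_ok src tgt (M i).
Hypothesis Mlen : forall i, plen (M i) = n.

Definition fstep (x : ZQ_arrow A m * bool) : seq (A * bool) :=
  match x with
  | (inl (a, _), b) => [:: (a, b)]
  | (inr (i, _), b) => seg b (M i)
  end.

Fixpoint sbal (s : seq (ZQ_arrow A m * bool)) : int :=
  match s with
  | [::] => 0
  | (inl _, _) :: s' => sbal s'
  | (inr _, b) :: s' => (if b then 1 else -1) + sbal s'
  end.

Lemma zq_map s : forall v t, sok (ZQ_src src tgt M) (ZQ_tgt tgt M) (v, t) s ->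
  let s' := flatten (map fstep s) in
  [/\ sok src tgt v s', send src tgt v s' = (send (ZQ_src src tgt M) (ZQ_tgt tgt M) (v, t) s).1,
      (send (ZQ_src src tgt M) (ZQ_tgt tgt M) (v, t) s).2 = t + sbal s &
      sgr s' = sgr s - (n%:Z + 1) * sbal s].
Proof.
elim: s => [|[[[a t']|[i t']] b] s IH] v t /=.
- by move=> _; split=> //; rewrite ?addr0 ?mulr0 ?subr0.
- case: b => -[E Hs]; case: E => E1 E2.
  + subst; have [T1 T2 T3 T4] := IH _ _ Hs; split=> //; rewrite T4; lra.
  + subst; have [T1 T2 T3 T4] := IH _ _ Hs; split=> //; rewrite T4; lra.
- have [S1 S2 S3] := seg_ok b (Mok i).
  rewrite Mlen in S3.
  case: b S1 S2 S3 => S1 S2 S3 -[E Hs]; case: E => E1 E2.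
  + have [T1 T2 T3 T4] := IH _ _ Hs.
    have Ev : v = rstart tgt true (M i) by rewrite -E1.
    split.
    * apply/sok_cat; rewrite Ev; split=> //; rewrite S2 //.
    * by rewrite send_cat Ev S2.
    * rewrite T3 E2; lra.
    * rewrite sgr_cat S3 T4 expr1; lra.
  + have [T1 T2 T3 T4] := IH _ _ Hs.
    have Ev : v = rstart tgt false (M i) by rewrite -E1.
    split.
    * apply/sok_cat; rewrite Ev; split=> //; rewrite S2 //.
    * by rewrite send_cat Ev S2.
    * rewrite T3 -E2; lra.
    * rewrite sgr_cat S3 T4 expr0; lra.
Qed.

End ZQ.

Theorem theorem4p7 (k : fieldType) (V A : finType) (src tgt : A -> V)
    (rho : relation k V A -> Prop) (n m : nat) (M : 'I_m -> qpath V A) :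
  (forall r, rho r -> is_relation src tgt r) ->
  properly_graded src tgt rho n ->
  is_top_basis src tgt rho n M ->
  nicely_graded src tgt ->
  nicely_graded (ZQ_src src tgt M) (ZQ_tgt tgt M).
Proof.
move=> _ PG [TB _ _] NG p0 ps Hw Hc.
have Mok : forall i, path_ok src tgt (M i) by move=> i; case: (TB i) => -[].
have Mlen : forall i, plen (M i) = n by move=> i; apply: PG.
have [s [S1 S2 S3]] := walk_to_steps Hw.
rewrite -S3.
move: S1 S2; case E: (walk_start p0 ps) => [v t] S1 S2.
have [T1 T2 T3 T4] := zq_map Mok Mlen S1.
rewrite -Hc E in S2.
rewrite S2 /= in T2 T3.
have Hb : sbal s = 0 by lra.
have := steps_zero NG T1 T2; rewrite T4 Hb; lra.
Qed.
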